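(* Let $\alpha\in(0,1)$ and $\nu\in\mathbb{N}$ with $2\nu>1/(1-\alpha)$, and let $K_{\alpha,\nu}(x)=\sum_{k=0}^{\infty}2^{-2\alpha\nu k}\phi(2^{2\nu k}x)$, where $\phi$ is the $2$-periodic function with $\phi(x)=|x|$ on $[-1,1]$. Then for every $M\ge 1$ and every $m\in\mathbb{N}$, \[ \frac{1}{2M}\int_{-M}^{M}\left|\frac{K_{\alpha,\nu}(x+2^{-2\nu m-1})-K_{\alpha,\nu}(x)}{2^{-2\nu m-1}}\right|dx\ \ge\ \frac14\,K(m,\nu,\alpha,1), \] where $K(m,\nu,\alpha,1)=\dfrac{2^{2\nu(1-\alpha)}-2}{2^{2\nu(1-\alpha)}-1}\big(2^{2\nu(1-\alpha)}\big)^{m}$. *)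

(* Defs.v *)
From Stdlib Require Import Reals Lra Lia.
From Coquelicot Require Import Coquelicot.
Open Scope R_scope.

(* phi : the 2-periodic function with phi x = |x| on [-1,1].
   Int_part is the floor; x - 2*floor((x+1)/2) lies in [-1,1). *)
Definition phi (x : R) : R := Rabs (x - 2 * IZR (Int_part ((x + 1) / 2))).

Definition Kan (alpha : R) (nu : nat) (x : R) : R :=
  Series (fun k : nat => Rpower 2 (- (2 * alpha * INR nu * INR k))
                         * phi (2 ^ (2 * nu * k) * x)).

Definition Kconst (m nu : nat) (alpha : R) : R :=
  (Rpower 2 (2 * INR nu * (1 - alpha)) - 2) / (Rpower 2 (2 * INR nu * (1 - alpha)) - 1)
  * (Rpower 2 (2 * INR nu * (1 - alpha))) ^ m.

(* Main.v *)
Require Import Defs.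
From Stdlib Require Import Reals Lra Lia.
From Coquelicot Require Import Coquelicot.
Open Scope R_scope.

Lemma phi_spec x : exists n : Z, phi x = Rabs (x - 2 * IZR n) /\ -1 <= x - 2 * IZR n < 1.
Proof.
  exists (Int_part ((x + 1) / 2)). split; [reflexivity|].
  destruct (base_Int_part ((x+1)/2)) as [H1 H2]. lra.
Qed.

Lemma phi_le x n : phi x <= Rabs (x - 2 * IZR n).
Proof.
  destruct (phi_spec x) as [n0 [E B]]. rewrite E.
  destruct (Z.lt_trichotomy n n0) as [H|[H|H]].
  - assert (IZR n <= IZR n0 - 1) by (rewrite <- minus_IZR; apply IZR_le; lia).
    unfold Rabs; repeat destruct Rcase_abs; lra.
  - subst; lra.
  - assert (IZR n >= IZR n0 + 1) by (rewrite <- plus_IZR; apply IZR_ge; lia).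
    unfold Rabs; repeat destruct Rcase_abs; lra.
Qed.

Lemma phi_eq x n : Rabs (x - 2 * IZR n) <= 1 -> phi x = Rabs (x - 2 * IZR n).
Proof.
  intro Hb. apply Rle_antisym; [apply phi_le|].
  destruct (phi_spec x) as [n0 [E B]]. rewrite E.
  destruct (Z.lt_trichotomy n n0) as [H|[H|H]].
  - assert (IZR n <= IZR n0 - 1) by (rewrite <- minus_IZR; apply IZR_le; lia).
    revert Hb; unfold Rabs; repeat destruct Rcase_abs; lra.
  - subst; lra.
  - assert (IZR n >= IZR n0 + 1) by (rewrite <- plus_IZR; apply IZR_ge; lia).
    revert Hb; unfold Rabs; repeat destruct Rcase_abs; lra.
Qed.

Lemma phi_lip a b : Rabs (phi a - phi b) <= Rabs (a - b).
Proof.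
  destruct (phi_spec a) as [na [Ea _]]. destruct (phi_spec b) as [nb [Eb _]].
  assert (H1 := phi_le a nb). assert (H2 := phi_le b na).
  rewrite Ea, Eb in *. apply Rabs_le.
  revert H1 H2; unfold Rabs; repeat destruct Rcase_abs; lra.
Qed.

Lemma phi_per x n : phi (x + 2 * IZR n) = phi x.
Proof.
  destruct (phi_spec x) as [n0 [E B]].
  rewrite E, (phi_eq _ (n0 + n)).
  - rewrite plus_IZR; f_equal; ring.
  - rewrite plus_IZR. replace (x + 2 * IZR n - 2 * (IZR n0 + IZR n)) with (x - 2 * IZR n0) by ring.
    unfold Rabs; destruct Rcase_abs; lra.
Qed.

Lemma phi_bound x : 0 <= phi x <= 1.
Proof.
  destruct (phi_spec x) as [n0 [E B]]. rewrite E. split; [apply Rabs_pos|].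
  unfold Rabs; destruct Rcase_abs; lra.
Qed.

Lemma phi_good y j : IZR j <= y <= IZR j + / 2 -> Rabs (phi (y + / 2) - phi y) = / 2.
Proof.
  intro Hy.
  assert (Hj : (j = 2 * (j / 2) + j mod 2)%Z) by (apply Z.div_mod; lia).
  assert (Hr := Z.mod_pos_bound j 2 ltac:(lia)).
  set (i := (j / 2)%Z) in *. set (r := (j mod 2)%Z) in *.
  assert (r = 0%Z \/ r = 1%Z) as [Hr0|Hr0] by lia.
  - assert (IZR j = 2 * IZR i) by (rewrite Hj, Hr0, plus_IZR, mult_IZR; simpl; ring).
    rewrite (phi_eq y i), (phi_eq (y + /2) i);
    unfold Rabs; repeat destruct Rcase_abs; lra.
  - assert (IZR j = 2 * IZR i + 1) by (rewrite Hj, Hr0, plus_IZR, mult_IZR; simpl; ring).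
    assert (IZR (i+1) = IZR i + 1) by (rewrite plus_IZR; reflexivity).
    rewrite (phi_eq y (i+1)), (phi_eq (y + /2) (i+1));
    rewrite ?H0; unfold Rabs; repeat destruct Rcase_abs; lra.
Qed.

Lemma phi_cont x : continuous phi x.
Proof.
  apply continuity_pt_filterlim.
  intros eps Heps. exists eps. split; [lra|].
  intros y [_ Hy]. simpl in *. unfold R_dist in *.
  eapply Rle_lt_trans; [apply phi_lip|]. exact Hy.
Qed.

Definition cc (al : R) (nu k : nat) := Rpower 2 (-(2 * al * INR nu * INR k)).
Definition rr (al : R) (nu : nat) := Rpower 2 (2 * INR nu * (1 - al)).

Lemma Rpower_pos x y : 0 < Rpower x y.
Proof. unfold Rpower; apply exp_pos. Qed.

Lemma pow2_Rpower n : 2 ^ n = Rpower 2 (INR n).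
Proof. rewrite Rpower_pow; lra. Qed.

Lemma cc_pow al nu k : cc al nu k * 2 ^ (2 * nu * k) = rr al nu ^ k.
Proof.
  unfold cc, rr. rewrite pow2_Rpower, <- Rpower_plus, <- Rpower_pow by apply Rpower_pos.
  rewrite Rpower_mult. f_equal. rewrite !mult_INR. simpl (INR 2). ring.
Qed.

Lemma cc_geom al nu k : cc al nu k = Rpower 2 (-(2 * al * INR nu)) ^ k.
Proof.
  unfold cc. rewrite <- Rpower_pow by apply Rpower_pos. rewrite Rpower_mult. f_equal; ring.
Qed.

Lemma ex_Kan al nu y : 0 < al -> (0 < nu)%nat ->
  ex_series (fun k => Rpower 2 (- (2 * al * INR nu * INR k)) * phi (2 ^ (2 * nu * k) * y)).
Proof.
  intros Ha Hn.
  apply (@ex_series_le R_AbsRing R_CompleteNormedModule _ (fun k => Rpower 2 (-(2 * al * INR nu)) ^ k)).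
  - intro k. change (norm ?x) with (Rabs x). fold (cc al nu k). rewrite <- cc_geom.
    destruct (phi_bound (2 ^ (2 * nu * k) * y)).
    assert (0 < cc al nu k) by apply Rpower_pos.
    rewrite Rabs_pos_eq by (apply Rmult_le_pos; lra).
    rewrite <- (Rmult_1_r (cc al nu k)) at 2. apply Rmult_le_compat_l; lra.
  - apply ex_series_geom. rewrite Rabs_pos_eq by (left; apply Rpower_pos).
    rewrite <- (Rpower_O 2) by lra. apply Rpower_lt; [lra|].
    assert (0 < INR nu) by (apply lt_0_INR; lia). nra.
Qed.

Lemma sum_n_stable (u : nat -> R) m : (forall k, (m < k)%nat -> u k = 0) ->
  forall d, sum_n u (m + d) = sum_n u m.
Proof.
  intros Hu d. induction d.
  - now rewrite Nat.add_0_r.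
  - rewrite Nat.add_succ_r, sum_Sn, IHd, Hu by lia. exact (@plus_zero_r R_AbelianGroup _).
Qed.

Lemma Kan_diff al nu m x : 0 < al -> (0 < nu)%nat ->
  let h := / 2 ^ (2 * nu * m + 1) in
  Kan al nu (x + h) - Kan al nu x =
  sum_n (fun k => cc al nu k * (phi (2 ^ (2 * nu * k) * (x + h)) - phi (2 ^ (2 * nu * k) * x))) m.
Proof.
  intros Ha Hn h. unfold Kan. rewrite <- Series_minus by (apply ex_Kan; auto).
  unfold Series.
  rewrite (Lim_seq_ext_loc _ (fun _ => sum_n (fun k => cc al nu k * (phi (2 ^ (2 * nu * k) * (x + h)) - phi (2 ^ (2 * nu * k) * x))) m)).
  { rewrite Lim_seq_const. reflexivity. }
  exists m. intros n Hnm.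
  replace n with (m + (n - m))%nat by lia.
  rewrite <- (sum_n_stable _ m) with (d := (n - m)%nat).
  - apply sum_n_ext. intro k. unfold cc. rewrite Rmult_minus_distr_l. reflexivity.
  - intros k Hk. 
    set (d := (2 * nu * k - 2 * nu * m - 2)%nat).
    assert (E : 2 ^ (2 * nu * k) * h = 2 * IZR (Z.of_nat (2 ^ d))).
    { rewrite <- INR_IZR_INZ, pow_INR. simpl (INR 2). unfold h.
      replace (2 * nu * k)%nat with ((2 * nu * m + 1) + S d)%nat by (unfold d; nia).
      rewrite pow_add, <- tech_pow_Rmult. replace (1+1) with 2 by ring. field. apply pow_nonzero; lra. }
    rewrite Rmult_plus_distr_l, E, phi_per. ring.
Qed.

Definition hh (nu m : nat) := / 2 ^ (2 * nu * m + 1).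
Definition uu al nu m x k :=
  cc al nu k * (phi (2 ^ (2 * nu * k) * (x + hh nu m)) - phi (2 ^ (2 * nu * k) * x)).

Lemma hh_pos nu m : 0 < hh nu m.
Proof. unfold hh. apply Rinv_0_lt_compat, pow_lt; lra. Qed.

Lemma uu_bound al nu m x k : Rabs (uu al nu m x k) <= rr al nu ^ k * hh nu m.
Proof.
  unfold uu. rewrite Rabs_mult, (Rabs_pos_eq (cc _ _ _)) by (left; apply Rpower_pos).
  rewrite <- cc_pow, Rmult_assoc. apply Rmult_le_compat_l; [left; apply Rpower_pos|].
  eapply Rle_trans; [apply phi_lip|].
  replace (2 ^ (2 * nu * k) * (x + hh nu m) - 2 ^ (2 * nu * k) * x) with (2 ^ (2 * nu * k) * hh nu m) by ring.
  rewrite Rabs_pos_eq; [lra|]. apply Rmult_le_pos; [left; apply pow_lt; lra| left; apply hh_pos].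
Qed.

Lemma sum_bound al nu m x n : 1 < rr al nu ->
  Rabs (sum_n (uu al nu m x) n) <= hh nu m * ((rr al nu ^ (S n) - 1) / (rr al nu - 1)).
Proof.
  intros Hr. induction n.
  - rewrite sum_O. eapply Rle_trans; [apply uu_bound|]. right. simpl. field. lra.
  - rewrite sum_Sn. change (plus ?a ?b) with (a + b).
    eapply Rle_trans; [apply Rabs_triang|].
    assert (H := uu_bound al nu m x (S n)).
    assert (E : hh nu m * ((rr al nu ^ S (S n) - 1) / (rr al nu - 1)) =
      hh nu m * ((rr al nu ^ (S n) - 1) / (rr al nu - 1)) + rr al nu ^ S n * hh nu m).
    { simpl. field. lra. }
    rewrite E. lra.
Qed.

Lemma hh_scale nu m : 2 ^ (2 * nu * m) * hh nu m = / 2.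
Proof.
  unfold hh. rewrite pow_add. simpl. field. apply pow_nonzero; lra.
Qed.

Lemma uu_good al nu m x j : IZR j <= 2 ^ (2 * nu * m) * x <= IZR j + / 2 ->
  Rabs (uu al nu m x m) = rr al nu ^ m * hh nu m.
Proof.
  intro Hj. unfold uu. rewrite Rmult_plus_distr_l, hh_scale, Rabs_mult, phi_good with (j := j) by lra.
  rewrite Rabs_pos_eq by (left; apply Rpower_pos).
  rewrite <- cc_pow, Rmult_assoc, hh_scale. reflexivity.
Qed.

Lemma F_good al nu m x j : 2 < rr al nu -> IZR j <= 2 ^ (2 * nu * m) * x <= IZR j + / 2 ->
  Kconst m nu al <= Rabs (sum_n (uu al nu m x) m / hh nu m).
Proof.
  intros Hr Hj. unfold Kconst. fold (rr al nu).
  assert (Hh := hh_pos nu m).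
  unfold Rdiv at 2. rewrite Rabs_mult, (Rabs_pos_eq (/ hh nu m)) by (left; apply Rinv_0_lt_compat; lra).
  assert (Hg := uu_good al nu m x j Hj).
  set (R1 := rr al nu ^ m).
  apply Rle_trans with (R1 - (R1 - 1) / (rr al nu - 1)).
  { assert (E : R1 - (R1 - 1) / (rr al nu - 1) - (rr al nu - 2) / (rr al nu - 1) * R1 = / (rr al nu - 1)) by (field; lra).
    assert (0 < / (rr al nu - 1)) by (apply Rinv_0_lt_compat; lra). lra. }
  apply (Rmult_le_reg_r (hh nu m)); [lra|].
  rewrite Rmult_assoc, Rinv_l, Rmult_1_r by lra.
  destruct m as [|m'].
  - rewrite sum_O. rewrite Hg. unfold R1. simpl.
    replace ((1 - 1) / (rr al nu - 1)) with 0 by (field; lra). lra.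
  - rewrite sum_Sn. change (plus ?a ?b) with (a + b).
    assert (Hs := sum_bound al nu (S m') x m' ltac:(lra)). fold R1 in Hs.
    assert (T := Rabs_triang_inv (uu al nu (S m') x (S m')) (- sum_n (uu al nu (S m') x) m')).
    rewrite Rabs_Ropp in T. replace (uu al nu (S m') x (S m') - - sum_n (uu al nu (S m') x) m') with
      (sum_n (uu al nu (S m') x) m' + uu al nu (S m') x (S m')) in T by ring.
    rewrite Hg in T. fold R1 in T.
    set (X := (R1 - 1) / (rr al nu - 1)) in *. nra.
Qed.

Lemma uu_cont al nu m k x : continuous (fun x => uu al nu m x k) x.
Proof.
  unfold uu.
  apply (@continuous_mult R_UniformSpace R_AbsRing (fun _ => cc al nu k)
    (fun x => phi (2 ^ (2 * nu * k) * (x + hh nu m)) - phi (2 ^ (2 * nu * k) * x))).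
  - apply continuous_const.
  - apply (@continuous_minus R_UniformSpace R_AbsRing R_NormedModule
      (fun x => phi (2 ^ (2 * nu * k) * (x + hh nu m))) (fun x => phi (2 ^ (2 * nu * k) * x))).
    + apply (continuous_comp (fun x => 2 ^ (2 * nu * k) * (x + hh nu m)) phi).
      * apply (@continuous_mult R_UniformSpace R_AbsRing (fun _ => 2 ^ (2 * nu * k)) (fun x => x + hh nu m)).
        -- apply continuous_const.
        -- apply (@continuous_plus R_UniformSpace R_AbsRing R_NormedModule (fun x => x) (fun _ => hh nu m)).
           ++ apply continuous_id.
           ++ apply continuous_const.
      * apply phi_cont.
    + apply (continuous_comp (fun x => 2 ^ (2 * nu * k) * x) phi).
      * apply (@continuous_mult R_UniformSpace R_AbsRing (fun _ => 2 ^ (2 * nu * k)) (fun x => x)).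
        -- apply continuous_const.
        -- apply continuous_id.
      * apply phi_cont.
Qed.

Lemma S_cont al nu m n x : continuous (fun x => sum_n (uu al nu m x) n) x.
Proof.
  induction n.
  - apply (continuous_ext (fun x => uu al nu m x 0)); [intro; now rewrite sum_O|]. apply uu_cont.
  - apply (continuous_ext (fun x => sum_n (uu al nu m x) n + uu al nu m x (S n))); [intro; now rewrite sum_Sn|].
    apply (@continuous_plus R_UniformSpace R_AbsRing R_NormedModule (fun x => sum_n (uu al nu m x) n) (fun x => uu al nu m x (S n))).
    + exact IHn.
    + apply uu_cont.
Qed.

Lemma G_cont al nu m x : continuous (fun x => Rabs (sum_n (uu al nu m x) m / hh nu m)) x.
Proof.
  apply continuous_Rabs_comp.
  apply (@continuous_mult R_UniformSpace R_AbsRing (fun x => sum_n (uu al nu m x) m) (fun _ => / hh nu m)).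
  - apply S_cont.
  - apply continuous_const.
Qed.

Lemma G_ex al nu m a b : ex_RInt (fun x => Rabs (sum_n (uu al nu m x) m / hh nu m)) a b.
Proof. apply (@ex_RInt_continuous R_CompleteNormedModule). intros; apply G_cont. Qed.

Lemma piece al nu m j : 2 < rr al nu ->
  let L := / 2 ^ (2 * nu * m) in
  L / 2 * Kconst m nu al <=
  RInt (fun x => Rabs (sum_n (uu al nu m x) m / hh nu m)) (IZR j * L) (IZR j * L + L).
Proof.
  intros Hr L.
  set (G := fun x => Rabs (sum_n (uu al nu m x) m / hh nu m)).
  assert (HP : 0 < 2 ^ (2 * nu * m)) by (apply pow_lt; lra).
  assert (HL : 0 < L) by (apply Rinv_0_lt_compat; lra).
  rewrite <- (RInt_Chasles G _ (IZR j * L + L / 2)) by apply G_ex.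
  change (plus ?a ?b) with (a + b).
  assert (H1 : L / 2 * Kconst m nu al <= RInt G (IZR j * L) (IZR j * L + L / 2)).
  { replace (L / 2 * Kconst m nu al) with (RInt (fun _ => Kconst m nu al) (IZR j * L) (IZR j * L + L / 2)).
    2:{ rewrite RInt_const. change ((IZR j * L + L / 2 - IZR j * L) * Kconst m nu al = L/2*Kconst m nu al). field. }
    apply RInt_le; [lra| apply ex_RInt_const | apply G_ex |].
    intros x Hx. unfold G. apply F_good with (j := j); [exact Hr|].
    assert (E1 : 2 ^ (2 * nu * m) * x - IZR j = 2 ^ (2 * nu * m) * (x - IZR j * L)) by (unfold L; field; lra).
    assert (E2 : 2 ^ (2 * nu * m) * x - IZR j - / 2 = 2 ^ (2 * nu * m) * (x - (IZR j * L + L / 2))) by (unfold L; field; lra).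
    nra. }
  assert (H2 : 0 <= RInt G (IZR j * L + L / 2) (IZR j * L + L)).
  { apply RInt_ge_0; [lra| apply G_ex |]. intros; apply Rabs_pos. }
  lra.
Qed.

Lemma pieces al nu m j0 p : 2 < rr al nu ->
  let L := / 2 ^ (2 * nu * m) in
  INR p * (L / 2 * Kconst m nu al) <=
  RInt (fun x => Rabs (sum_n (uu al nu m x) m / hh nu m)) (IZR j0 * L) (IZR (j0 + Z.of_nat p) * L).
Proof.
  intros Hr L. induction p.
  - simpl. rewrite Z.add_0_r, RInt_point. rewrite Rmult_0_l. right. reflexivity.
  - rewrite <- (RInt_Chasles _ _ (IZR (j0 + Z.of_nat p) * L)) by apply G_ex.
    change (plus ?a ?b) with (a + b).
    replace (IZR (j0 + Z.of_nat (S p)) * L) with (IZR (j0 + Z.of_nat p) * L + L).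
    2:{ replace (j0 + Z.of_nat (S p))%Z with ((j0 + Z.of_nat p) + 1)%Z by lia. rewrite (plus_IZR _ 1). ring. }
    assert (H : L / 2 * Kconst m nu al <= RInt (fun x => Rabs (sum_n (uu al nu m x) m / hh nu m)) (IZR (j0 + Z.of_nat p) * L) (IZR (j0 + Z.of_nat p) * L + L))
      by exact (piece al nu m (j0 + Z.of_nat p) Hr).
    rewrite S_INR. lra.
Qed.

Theorem proposition1 (alpha : R) (nu : nat)
  (Ha : 0 < alpha < 1) (Hnu : 2 * INR nu > 1 / (1 - alpha))
  (M : R) (HM : 1 <= M) (m : nat) :
  let h := / 2 ^ (2 * nu * m + 1) in
  / (2 * M) * RInt (fun x => Rabs ((Kan alpha nu (x + h) - Kan alpha nu x) / h)) (- M) M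
  >= / 4 * Kconst m nu alpha.
Proof.
  intros h.
  assert (H1a : 1 < 2 * INR nu * (1 - alpha)).
  { assert (E : 1 / (1 - alpha) * (1 - alpha) = 1) by (field; lra).
    assert (0 < 1 - alpha) by lra.
    assert (1 / (1 - alpha) * (1 - alpha) < 2 * INR nu * (1 - alpha)) by (apply Rmult_lt_compat_r; lra).
    lra. }
  assert (Hnu0 : (0 < nu)%nat).
  { destruct nu; [simpl in H1a; lra| lia]. }
  assert (Hr : 2 < rr alpha nu).
  { unfold rr. rewrite <- (Rpower_1 2) at 1 by lra. apply Rpower_lt; lra. }
  set (G := fun x => Rabs (sum_n (uu alpha nu m x) m / hh nu m)).
  rewrite (RInt_ext _ G).
  2:{ intros x _. unfold G, h. rewrite (Kan_diff alpha nu m x) by (lra || lia). reflexivity. }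
  assert (HKc : 0 <= Kconst m nu alpha).
  { unfold Kconst. fold (rr alpha nu). apply Rmult_le_pos.
    - apply Rmult_le_pos; [lra| left; apply Rinv_0_lt_compat; lra].
    - apply pow_le; lra. }
  set (z := Int_part M).
  destruct (base_Int_part M) as [Hz1 Hz2]. fold z in Hz1, Hz2.
  assert (Hz : (1 <= z)%Z).
  { assert (0 < IZR z) by lra. apply lt_IZR in H. lia. }
  assert (HzR : 1 <= IZR z) by (apply IZR_le in Hz; exact Hz).
  set (N := IZR z). assert (HN1 : 1 <= N) by exact HzR. assert (HN2 : N <= M) by exact Hz1. assert (HN3 : N - M > -1) by exact Hz2.
  assert (Hmid : N * Kconst m nu alpha <= RInt G (- N) N).
  { set (T := (2 ^ (2 * nu * m))%nat).
    assert (HT : INR T = 2 ^ (2 * nu * m)) by (unfold T; rewrite pow_INR; reflexivity).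
    assert (HTp : 0 < INR T) by (rewrite HT; apply pow_lt; lra).
    set (L := / 2 ^ (2 * nu * m)).
    set (p := (2 * Z.to_nat z * T)%nat).
    assert (Hp : INR p * (L / 2 * Kconst m nu alpha) <= RInt G (IZR (- (z * Z.of_nat T)) * L) (IZR (- (z * Z.of_nat T) + Z.of_nat p) * L))
      by exact (pieces alpha nu m (- (z * Z.of_nat T)) p Hr).
    replace (IZR (- (z * Z.of_nat T) + Z.of_nat p)) with (IZR (z * Z.of_nat T)) in Hp
      by (f_equal; unfold p; lia).
    rewrite opp_IZR, !mult_IZR, <- INR_IZR_INZ in Hp.
    replace (- (IZR z * INR T) * L) with (- N) in Hp by (unfold N, L; rewrite HT; field; apply pow_nonzero; lra).
    replace (IZR z * INR T * L) with N in Hp by (unfold N, L; rewrite HT; field; apply pow_nonzero; lra).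
    replace (INR p * (L / 2 * Kconst m nu alpha)) with (N * Kconst m nu alpha) in Hp.
    { exact Hp. }
    unfold p. rewrite !mult_INR, (INR_IZR_INZ (Z.to_nat z)), Znat.Z2Nat.id by lia. unfold N, L. rewrite HT.
    simpl (INR 2). field. apply pow_nonzero; lra. }
  assert (Hl : 0 <= RInt G (- M) (- N)).
  { apply RInt_ge_0; [lra| apply G_ex|]. intros; apply Rabs_pos. }
  assert (Hrt : 0 <= RInt G N M).
  { apply RInt_ge_0; [lra| apply G_ex|]. intros; apply Rabs_pos. }
  rewrite <- (RInt_Chasles G (- M) N M) by apply G_ex.
  rewrite <- (RInt_Chasles G (- M) (- N) N) by apply G_ex.
  change (plus ?a ?b) with (a + b). change (plus ?a ?b) with (a + b).
  set (I := RInt G (- M) (- N) + RInt G (- N) N + RInt G N M).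
  assert (HI : N * Kconst m nu alpha <= I) by (unfold I; lra).
  apply Rle_ge.
  apply Rle_trans with (/ (2 * M) * (N * Kconst m nu alpha)).
  - assert (E : / (2 * M) * (N * Kconst m nu alpha) - / 4 * Kconst m nu alpha
               = Kconst m nu alpha * (2 * N - M) * / (4 * M)) by (field; lra).
    assert (0 <= Kconst m nu alpha * (2 * N - M) * / (4 * M)).
    { apply Rmult_le_pos; [apply Rmult_le_pos; [lra| unfold N; lra]| left; apply Rinv_0_lt_compat; lra]. }
    lra.
  - apply Rmult_le_compat_l; [left; apply Rinv_0_lt_compat; lra| exact HI].
Qed.
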